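(* Let $(A,[\cdot,\cdot])$ be a Malcev algebra, $(V;[\cdot,\cdot]_V,\rho)$ an $A$-module Malcev algebra, $\lambda\in\mathbb{K}$, and $T:V\to A$ a $\lambda$-weighted $\mathcal{O}$-operator associated to $(V;[\cdot,\cdot]_V,\rho)$. Then $V$ with the bracket $[a,b]_T=\rho(T(a))b-\rho(T(b))a+\lambda[a,b]_V$ is a Malcev algebra, and $T:(V,[\cdot,\cdot]_T)\to(A,[\cdot,\cdot])$ is a homomorphism of Malcev algebras.
   Context: Field $\mathbb{K}$ of characteristic zero. A Malcev algebra is a vector space with anti-symmetric bracket satisfying $J(x,y,[x,z])=[J(x,y,z),x]$, $J(x,y,z)=[[x,y],z]+[[z,x],y]+[[y,z],x]$. A representation of $A$ on $V$ is linear $\rho:A\to\mathrm{End}(V)$ with $\rho([[x,y],z])=\rho(x)\rho(y)\rho(z)-\rho(z)\rho(x)\rho(y)+\rho(y)\rho([z,x])-\rho([y,z])\rho(x)$. An $A$-module Malcev algebra $(V;[\cdot,\cdot]_V,\rho)$ is a Malcev algebra $(V,[\cdot,\cdot]_V)$ with a representation $\rho$ such that for $x,y\in A$, $a,b,c\in V$: $\rho([x,y])[a,b]_V=\rho(x)[\rho(y)a,b]_V-[\rho(y)\rho(x)a,b]_V-[\rho(x)\rho(y)b,a]_V+\rho(y)[\rho(x)b,a]_V$; $[\rho(x)a,\rho(y)b]_V=[\rho([x,y])a,b]_V-\rho(x)[\rho(y)a,b]_V+\rho(y)\rho(x)[a,b]_V+[\rho(y)\rho(x)b,a]_V$; $[\rho(x)a,[b,c]_V]_V=[[\rho(x)b,a]_V,c]_V-\rho(x)[[b,a]_V,c]_V-[\rho(x)[a,c]_V,b]_V-[[\rho(x)c,b]_V,a]_V$.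 A $\lambda$-weighted $\mathcal{O}$-operator associated to it is a linear $T:V\to A$ with $[T(a),T(b)]=T(\rho(T(a))b-\rho(T(b))a+\lambda[a,b]_V)$ for all $a,b\in V$. *)

(* Defs.v *)
From mathcomp Require Import all_boot all_algebra.
Set Implicit Arguments. Unset Strict Implicit. Unset Printing Implicit Defensive.
Import GRing.Theory.
Local Open Scope ring_scope.

Section MalcevDefs.
Variable K : fieldType.

Definition is_linear (U W : lmodType K) (f : U -> W) : Prop :=
  forall (k : K) (x y : U), f (k *: x + y) = k *: f x + f y.

Definition is_bilinear (U : lmodType K) (br : U -> U -> U) : Prop :=
  (forall y, is_linear (fun x => br x y)) /\ (forall x, is_linear (br x)).

Definition anticomm (U : lmodType K) (br : U -> U -> U) : Prop :=
  forall x y, br x y = - br y x.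

Definition jacobiator (U : lmodType K) (br : U -> U -> U) (x y z : U) : U :=
  br (br x y) z + br (br z x) y + br (br y z) x.

Definition malcev (U : lmodType K) (br : U -> U -> U) : Prop :=
  [/\ is_bilinear br, anticomm br &
      forall x y z, jacobiator br x y (br x z) = br (jacobiator br x y z) x].

Definition malcev_rep (A V : lmodType K) (br : A -> A -> A) (rho : A -> V -> V)
  : Prop :=
  [/\ (forall v : V, is_linear (fun x => rho x v)), (forall x, is_linear (rho x)) &
      forall x y z (v : V),
        rho (br (br x y) z) v =
          rho x (rho y (rho z v)) - rho z (rho x (rho y v))
          + rho y (rho (br z x) v) - rho (br y z) (rho x v)].

Definition module_malcev (A V : lmodType K) (br : A -> A -> A)
  (brV : V -> V -> V) (rho : A -> V -> V) : Prop :=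
  [/\ malcev brV, malcev_rep br rho,
      (forall (x y : A) (a b : V),
        rho (br x y) (brV a b) =
          rho x (brV (rho y a) b) - brV (rho y (rho x a)) b
          - brV (rho x (rho y b)) a + rho y (brV (rho x b) a)),
      (forall (x y : A) (a b : V),
        brV (rho x a) (rho y b) =
          brV (rho (br x y) a) b - rho x (brV (rho y a) b)
          + rho y (rho x (brV a b)) + brV (rho y (rho x b)) a) &
      (forall (x : A) (a b c : V),
        brV (rho x a) (brV b c) =
          brV (brV (rho x b) a) c - rho x (brV (brV b a) c)
          - brV (rho x (brV a c)) b - brV (brV (rho x c) b) a)].

Definition weighted_O_operator (A V : lmodType K) (br : A -> A -> A)
  (brV : V -> V -> V) (rho : A -> V -> V) (lam : K) (T : V -> A) : Prop :=
  is_linear T /\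
  forall a b : V,
    br (T a) (T b) = T (rho (T a) b - rho (T b) a + lam *: brV a b).

Definition bracketT (A V : lmodType K) (brV : V -> V -> V) (rho : A -> V -> V)
  (lam : K) (T : V -> A) (a b : V) : V :=
  rho (T a) b - rho (T b) a + lam *: brV a b.

Definition malcev_hom (U W : lmodType K) (brU : U -> U -> U)
  (brW : W -> W -> W) (f : U -> W) : Prop :=
  is_linear f /\ forall x y, f (brU x y) = brW (f x) (f y).

End MalcevDefs.

(* Main.v *)
Require Import Defs.
From mathcomp Require Import all_boot all_algebra.
Set Implicit Arguments. Unset Strict Implicit. Unset Printing Implicit Defensive.
Import GRing.Theory.
Local Open Scope ring_scope.

Inductive sA : Type := SAx of nat | SAbr of sA & sA | SAadd of sA & sA | SAopp of sA.
Inductive sV : Type := SVa of nat | SVrho of sA & sV | SVbv of sV & sV | SVadd of sV & sV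
  | SVopp of sV | SVlam of sV | SVpow of nat & sV.

Notation tree := (GenTree.tree nat).

Fixpoint ser (t : tree) : seq nat :=
  match t with
  | GenTree.Leaf n => [:: 0%N; n]
  | GenTree.Node k [:: s; u] => 1%N :: k :: ser s ++ ser u ++ [:: 2%N]
  | _ => [:: 3%N]
  end.
Fixpoint lexlt (s t : seq nat) : bool :=
  match s, t with
  | [::], [::] => false
  | [::], _ => true
  | _, [::] => false
  | a :: s', b :: t' => (a < b)%N || ((a == b) && lexlt s' t')
  end.
Definition tlt (s t : tree) := lexlt (ser s) (ser t).

Definition nd (k : nat) (s t : tree) : tree := GenTree.Node k [:: s; t].

Definition brm (p q : int * tree) : int * tree :=
  let c := p.1 * q.1 in
  if p.2 == q.2 then (0, nd 0 p.2 q.2)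
  else if tlt q.2 p.2 then (- c, nd 0 q.2 p.2) else (c, nd 0 p.2 q.2).
Definition rhom (p : int * tree) (q : int * nat * tree) : int * nat * tree :=
  (p.1 * q.1.1, q.1.2, nd 1 p.2 q.2).
Definition bvm (p q : int * nat * tree) : int * nat * tree :=
  let c := p.1.1 * q.1.1 in let k := (p.1.2 + q.1.2)%N in
  if p.2 == q.2 then (0, k, nd 2 p.2 q.2)
  else if tlt q.2 p.2 then (- c, k, nd 2 q.2 p.2) else (c, k, nd 2 p.2 q.2).

Fixpoint nA (s : sA) : seq (int * tree) :=
  match s with
  | SAx i => [:: (1, GenTree.Leaf i)]
  | SAbr s t => allpairs brm (nA s) (nA t)
  | SAadd s t => nA s ++ nA t
  | SAopp s => [seq (- p.1, p.2) | p <- nA s]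
  end.
Fixpoint nV (s : sV) : seq (int * nat * tree) :=
  match s with
  | SVa i => [:: (1, 0%N, GenTree.Leaf i)]
  | SVrho s t => allpairs rhom (nA s) (nV t)
  | SVbv s t => allpairs bvm (nV s) (nV t)
  | SVadd s t => nV s ++ nV t
  | SVopp s => [seq (- p.1.1, p.1.2, p.2) | p <- nV s]
  | SVlam s => [seq (p.1.1, p.1.2.+1, p.2) | p <- nV s]
  | SVpow k s => [seq (p.1.1, (k + p.1.2)%N, p.2) | p <- nV s]
  end.

Fixpoint addTerm (p : int * nat * tree) (l : seq (int * nat * tree)) :=
  match l with
  | [::] => [:: p]
  | q :: l' => if (q.1.2 == p.1.2) && (q.2 == p.2) then (q.1.1 + p.1.1, q.1.2, q.2) :: l'
               else q :: addTerm p l'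
  end.
Definition collect l := foldr addTerm [::] l.
Definition checkV (s t : sV) : bool :=
  all (fun p : int * nat * tree => p.1.1 == 0) (collect (nV (SVadd s (SVopp t)))).

Definition sumf (T : Type) (U : zmodType) (e : T -> U) (l : seq T) : U :=
  foldr (fun p acc => e p + acc) 0 l.

Lemma sumf_cat T (U : zmodType) (e : T -> U) l1 l2 : sumf e (l1 ++ l2) = sumf e l1 + sumf e l2.
Proof. by elim: l1 => [|p l1 IH] /=; rewrite ?add0r // IH addrA. Qed.
Lemma sumf_map T1 T2 (U : zmodType) (e : T2 -> U) (f : T1 -> T2) l : sumf e (map f l) = sumf (e \o f) l.
Proof. by elim: l => [|p l IH] //=; rewrite IH. Qed.
Lemma sumf_ext T (U : zmodType) (e1 e2 : T -> U) l : (forall x, e1 x = e2 x) -> sumf e1 l = sumf e2 l.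
Proof. by move=> H; elim: l => [|p l IH] //=; rewrite IH H. Qed.
Lemma sumf_opp T (U : zmodType) (e : T -> U) l : sumf (fun x => - e x) l = - sumf e l.
Proof. by elim: l => [|p l IH] /=; rewrite ?oppr0 // IH opprD. Qed.

Lemma sumf_allpairs (X Y Z : Type) (U W P : zmodType) (B : U -> W -> P)
  (e1 : X -> U) (e2 : Y -> W) (e3 : Z -> P) (f : X -> Y -> Z) l1 l2 :
  (forall u u' w, B (u + u') w = B u w + B u' w) -> (forall w, B 0 w = 0) ->
  (forall u w w', B u (w + w') = B u w + B u w') -> (forall u, B u 0 = 0) ->
  (forall x y, e3 (f x y) = B (e1 x) (e2 y)) ->
  sumf e3 (allpairs f l1 l2) = B (sumf e1 l1) (sumf e2 l2).
Proof.
move=> BDl B0l BDr B0r H.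
have Hm : forall x, sumf e3 (map (f x) l2) = B (e1 x) (sumf e2 l2).
  move=> x; elim: l2 => [|y l2 IH2] /=; first by rewrite B0r.
  by rewrite BDr IH2 H.
elim: l1 => [|x l1 IH] /=; first by rewrite B0l.
by rewrite sumf_cat IH BDl Hm.
Qed.

Lemma scaler_sumf (K : fieldType) (T : Type) (U : lmodType K) (e : T -> U) (k : K) l :
  k *: sumf e l = sumf (fun x => k *: e x) l.
Proof. by elim: l => [|p l IH] /=; rewrite ?scaler0 // scalerDr IH. Qed.

Section Eval.
Variables (K : fieldType) (A V : lmodType K).
Variables (ax : nat -> A) (av : nat -> V) (br : A -> A -> A) (rho : A -> V -> V)
  (brV : V -> V -> V) (lam : K).

Fixpoint evA (s : sA) : A :=
  match s with
  | SAx i => ax i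
  | SAbr s t => br (evA s) (evA t)
  | SAadd s t => evA s + evA t
  | SAopp s => - evA s
  end.
Fixpoint evV (s : sV) : V :=
  match s with
  | SVa i => av i
  | SVrho s t => rho (evA s) (evV t)
  | SVbv s t => brV (evV s) (evV t)
  | SVadd s t => evV s + evV t
  | SVopp s => - evV s
  | SVlam s => lam *: evV s
  | SVpow k s => lam ^+ k *: evV s
  end.

Fixpoint etA (t : tree) : A :=
  match t with
  | GenTree.Leaf i => ax i
  | GenTree.Node _ [:: s; u] => br (etA s) (etA u)
  | _ => 0
  end.
Fixpoint etV (t : tree) : V :=
  match t with
  | GenTree.Leaf i => av i
  | GenTree.Node 1 [:: s; u] => rho (etA s) (etV u)
  | GenTree.Node _ [:: s; u] => brV (etV s) (etV u)
  | _ => 0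
  end.

Definition eA (p : int * tree) : A := p.1%:~R *: etA p.2.
Definition eV (p : int * nat * tree) : V := (p.1.1%:~R * lam ^+ p.1.2) *: etV p.2.

Hypothesis two : (2 : K) != 0.
Hypotheses (Hbl : forall y, is_linear (fun x => br x y)) (Hbr : forall x, is_linear (br x)).
Hypothesis Abr : anticomm br.
Hypotheses (HVl : forall y, is_linear (fun x => brV x y)) (HVr : forall x, is_linear (brV x)).
Hypothesis AbV : anticomm brV.
Hypotheses (Hrl : forall v, is_linear (fun x => rho x v)) (Hrr : forall x, is_linear (rho x)).

Lemma linD' (U W : lmodType K) (f : U -> W) : is_linear f -> forall x y, f (x + y) = f x + f y.
Proof. by move=> H x y; have := H 1 x y; rewrite !scale1r. Qed.
Lemma lin0' (U W : lmodType K) (f : U -> W) : is_linear f -> f 0 = 0.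
Proof. by move=> H; have := H (-1) 0 0; rewrite scaler0 add0r scaleN1r addNr. Qed.
Lemma linZ' (U W : lmodType K) (f : U -> W) : is_linear f -> forall k x, f (k *: x) = k *: f x.
Proof. by move=> H k x; rewrite -[k *: x]addr0 H (lin0' H) addr0. Qed.

Lemma anti0 (U : lmodType K) (f : U -> U -> U) : anticomm f -> forall u, f u u = 0.
Proof.
move=> Af u; have : (2 : K) *: f u u = 0.
  by rewrite scaler_nat mulr2n {1}Af addNr.
by move/eqP; rewrite scaler_eq0 (negbTE two) /= => /eqP.
Qed.

Lemma evA_ok s : sumf eA (nA s) = evA s.
Proof.
elim: s => [i|s IHs t IHt|s IHs t IHt|s IHs] /=.
- by rewrite /eA /= scale1r addr0.
- rewrite (@sumf_allpairs _ _ _ _ _ _ br eA eA eA) ?IHs ?IHt //.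
  + by move=> u u' w; exact: (linD' (Hbl w)).
  + by move=> w; exact: (lin0' (Hbl w)).
  + by move=> u w w'; exact: (linD' (Hbr u)).
  + by move=> u; exact: (lin0' (Hbr u)).
  move=> [c1 t1] [c2 t2]; rewrite /brm /eA /=.
  rewrite (linZ' (Hbl _)) (linZ' (Hbr _)) scalerA.
  case: eqP => [->|_]; first by rewrite scale0r /= (anti0 Abr) scaler0.
  case: ifP => _ /=; last by rewrite intrM mulrC.
  by rewrite (Abr (etA t2)) scalerN intrN scaleNr opprK intrM.
- by rewrite sumf_cat IHs IHt.
- rewrite sumf_map -IHs -sumf_opp; apply: sumf_ext => p.
  by rewrite /eA /= intrN scaleNr.
Qed.

Lemma evV_ok s : sumf eV (nV s) = evV s.
Proof.
elim: s => [i|s t IHt|s IHs t IHt|s IHs t IHt|s IHs|s IHs|k s IHs] /=.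
- by rewrite /eV /= mulr1 scale1r addr0.
- rewrite (@sumf_allpairs _ _ _ _ _ _ rho eA eV eV) ?evA_ok ?IHt //.
  + by move=> u u' w; exact: (linD' (Hrl w)).
  + by move=> w; exact: (lin0' (Hrl w)).
  + by move=> u w w'; exact: (linD' (Hrr u)).
  + by move=> u; exact: (lin0' (Hrr u)).
  move=> [c1 t1] [[c2 k] t2]; rewrite /rhom /eA /eV /=.
  by rewrite (linZ' (Hrl _)) (linZ' (Hrr _)) scalerA intrM mulrA.
- rewrite (@sumf_allpairs _ _ _ _ _ _ brV eV eV eV) ?IHs ?IHt //.
  + by move=> u u' w; exact: (linD' (HVl w)).
  + by move=> w; exact: (lin0' (HVl w)).
  + by move=> u w w'; exact: (linD' (HVr u)).
  + by move=> u; exact: (lin0' (HVr u)).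
  move=> [[c1 k1] t1] [[c2 k2] t2]; rewrite /bvm /eV /=.
  rewrite (linZ' (HVl _)) (linZ' (HVr _)) scalerA.
  have E : (c1%:~R * lam ^+ k1) * (c2%:~R * lam ^+ k2) = (c1 * c2)%:~R * lam ^+ (k1 + k2) :> K.
    by rewrite intrM exprD mulrACA.
  case: eqP => [->|_]; first by rewrite /= mul0r scale0r (anti0 AbV) scaler0.
  case: ifP => _ /=; last by rewrite E.
  by rewrite (AbV (etV t2)) scalerN E intrN mulNr scaleNr opprK.
- by rewrite sumf_cat IHs IHt.
- rewrite sumf_map -IHs -sumf_opp; apply: sumf_ext => p.
  by rewrite /eV /= intrN mulNr scaleNr.
- rewrite sumf_map -IHs scaler_sumf; apply: sumf_ext => p.
  by rewrite /eV /= exprS scalerA; congr (_ *: _); rewrite mulrCA.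
- rewrite sumf_map -IHs scaler_sumf; apply: sumf_ext => p.
  by rewrite /eV /= exprD scalerA; congr (_ *: _); rewrite mulrCA.
Qed.

Lemma addTerm_ok p l : sumf eV (addTerm p l) = sumf eV (p :: l).
Proof.
elim: l => [|q l IH] //=.
case: andP => [[/eqP Ek /eqP Et]|_] /=.
  rewrite /eV /= intrD mulrDl scalerDl -Ek -Et.
  by rewrite -addrA addrCA addrA.
by rewrite IH /= addrCA.
Qed.

Lemma collect_ok l : sumf eV (collect l) = sumf eV l.
Proof. by elim: l => [|p l IH] //=; rewrite addTerm_ok /= IH. Qed.

Lemma checkV_ok s t : checkV s t -> evV s = evV t.
Proof.
rewrite /checkV => H; apply/eqP; rewrite -subr_eq0; apply/eqP.
rewrite -[evV s - evV t]/(evV (SVadd s (SVopp t))) -evV_ok -collect_ok.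
elim: (collect _) H => [|p l IH] //= /andP [/eqP H0 /IH ->].
by rewrite /eV H0 mul0r scale0r addr0.
Qed.

End Eval.

Definition sbS (x : sA) (a : sV) (y : sA) (b : sV) : sV :=
  SVadd (SVadd (SVrho x b) (SVopp (SVrho y a))) (SVlam (SVbv a b)).
Definition jacA (x y z : sA) : sA :=
  SAadd (SAadd (SAbr (SAbr x y) z) (SAbr (SAbr z x) y)) (SAbr (SAbr y z) x).
Definition jacV (x y z : sV) : sV :=
  SVadd (SVadd (SVbv (SVbv x y) z) (SVbv (SVbv z x) y)) (SVbv (SVbv y z) x).
Definition swp (p : sV * sV) : sV * sV := (p.2, p.1).
Definition sREP x y z v :=
  (SVrho (SAbr (SAbr x y) z) v,
   SVadd (SVadd (SVadd (SVrho x (SVrho y (SVrho z v))) (SVopp (SVrho z (SVrho x (SVrho y v)))))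
     (SVrho y (SVrho (SAbr z x) v))) (SVopp (SVrho (SAbr y z) (SVrho x v)))).
Definition sM1 x y a b :=
  (SVrho (SAbr x y) (SVbv a b),
   SVadd (SVadd (SVadd (SVrho x (SVbv (SVrho y a) b)) (SVopp (SVbv (SVrho y (SVrho x a)) b)))
     (SVopp (SVbv (SVrho x (SVrho y b)) a))) (SVrho y (SVbv (SVrho x b) a))).
Definition sM2 x y a b :=
  (SVbv (SVrho x a) (SVrho y b),
   SVadd (SVadd (SVadd (SVbv (SVrho (SAbr x y) a) b) (SVopp (SVrho x (SVbv (SVrho y a) b))))
     (SVrho y (SVrho x (SVbv a b)))) (SVbv (SVrho y (SVrho x b)) a)).
Definition sM3 x a b c :=
  (SVbv (SVrho x a) (SVbv b c),
   SVadd (SVadd (SVadd (SVbv (SVbv (SVrho x b) a) c) (SVopp (SVrho x (SVbv (SVbv b a) c))))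
     (SVopp (SVbv (SVrho x (SVbv a c)) b))) (SVopp (SVbv (SVbv (SVrho x c) b) a))).
Definition sMV a b c := (jacV a b (SVbv a c), SVbv (jacV a b c) a).

Definition chainS (L : sV) (hs : seq (nat * (sV * sV))) (side : bool) : sV :=
  foldl (fun acc h => SVadd acc (SVopp (SVpow h.1 (if side then h.2.1 else h.2.2)))) L hs.

Section Chain.
Variables (K : fieldType) (A V : lmodType K).
Variables (ax : nat -> A) (av : nat -> V) (br : A -> A -> A) (rho : A -> V -> V)
  (brV : V -> V -> V) (lam : K).
Hypothesis two : (2 : K) != 0.
Hypotheses (Hbl : forall y, is_linear (fun x => br x y)) (Hbr : forall x, is_linear (br x)).
Hypothesis Abr : anticomm br.
Hypotheses (HVl : forall y, is_linear (fun x => brV x y)) (HVr : forall x, is_linear (brV x)).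
Hypothesis AbV : anticomm brV.
Hypotheses (Hrl : forall v, is_linear (fun x => rho x v)) (Hrr : forall x, is_linear (rho x)).

Local Notation ev := (evV ax av br rho brV lam).
Fixpoint allHolds (hs : seq (nat * (sV * sV))) : Prop :=
  match hs with [::] => True | h :: hs => ev h.2.1 = ev h.2.2 /\ allHolds hs end.

Lemma chain_ok L R hs : allHolds hs -> checkV (chainS L hs true) (chainS R hs false) -> ev L = ev R.
Proof.
move=> H /(checkV_ok ax av lam two Hbl Hbr Abr HVl HVr AbV Hrl Hrr).
elim: hs L R H => [|h hs IH] L R //= [Hh /IH H] E.
have := H _ _ E => /=; rewrite Hh => /(congr1 (fun t => t + lam ^+ h.1 *: ev h.2.2)) /=.
by rewrite !subrK.
Qed.
End Chain.

Definition LS (x y z : sA) (a b c : sV) : sV :=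
  SVadd (SVadd (sbS (SAbr x y) (sbS x a y b) (SAbr x z) (sbS x a z c))
                (sbS (SAbr (SAbr x z) x) (sbS (SAbr x z) (sbS x a z c) x a) y b))
        (sbS (SAbr y (SAbr x z)) (sbS y b (SAbr x z) (sbS x a z c)) x a).
Definition RS (x y z : sA) (a b c : sV) : sV :=
  sbS (jacA x y z) (SVadd (SVadd (sbS (SAbr x y) (sbS x a y b) z c) (sbS (SAbr z x) (sbS z c x a) y b))
                          (sbS (SAbr y z) (sbS y b z c) x a)) x a.
Definition HS : seq (nat * (sV * sV)) := [:: (3%N, sMV (SVa 0) (SVa 1) (SVa 2)); (2%N, sM3 (SAx 2) (SVa 0) (SVa 0) (SVa 1)); (2%N, sM3 (SAx 1) (SVa 0) (SVa 2) (SVa 0)); (1%N, sM2 (SAx 1) (SAx 2) (SVa 0) (SVa 0)); (2%N, swp (sM3 (SAx 0) (SVa 2) (SVa 0) (SVa 1))); (2%N, swp (sM3 (SAx 0) (SVa 1) (SVa 2) (SVa 0))); (2%N, swp (sM3 (SAx 0) (SVa 0) (SVa 2) (SVa 1))); (2%N, swp (sM3 (SAx 0) (SVa 0) (SVa 1) (SVa 2))); (1%N, sM2 (SAx 2) (SAx 0) (SVa 0) (SVa 1)); (1%N, sM1 (SAx 0) (SAx 2) (SVa 1) (SVa 0)); (1%N, sM1 (SAx 0) (SAx 1) (SVa 0) (SVa 2)); (1%N, sM2 (SAx 0) (SAx 1) (SVa 2) (SVa 0)); (0%N, swp (sREP (SAx 1) (SAx 2) (SAx 0) (SVa 0))); (0%N,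 swp (sREP (SAx 2) (SAx 0) (SAx 1) (SVa 0))); (0%N, swp (sREP (SAx 0) (SAx 2) (SAx 1) (SVa 0))); (0%N, swp (sREP (SAx 0) (SAx 1) (SAx 2) (SVa 0))); (1%N, sM2 (SAx 0) (SAx 0) (SVa 1) (SVa 2)); (0%N, sREP (SAx 0) (SAx 2) (SAx 0) (SVa 1)); (0%N, sREP (SAx 0) (SAx 0) (SAx 1) (SVa 2))].

Lemma check_core : checkV (chainS (LS (SAx 0) (SAx 1) (SAx 2) (SVa 0) (SVa 1) (SVa 2)) HS true)
                          (chainS (RS (SAx 0) (SAx 1) (SAx 2) (SVa 0) (SVa 1) (SVa 2)) HS false).
Proof. by vm_compute. Qed.

Definition sbV (K : fieldType) (A V : lmodType K) (brV : V -> V -> V) (rho : A -> V -> V) (lam : K)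
  (x : A) (a : V) (y : A) (b : V) : V := rho x b - rho y a + lam *: brV a b.

Lemma core (K : fieldType) (two : (2 : K) != 0) (A V : lmodType K) (br : A -> A -> A)
  (brV : V -> V -> V) (rho : A -> V -> V) (lam : K) :
  is_bilinear br -> anticomm br -> module_malcev br brV rho ->
  forall (x y z : A) (a b c : V),
  let sb := sbV brV rho lam in
  sb (br x y) (sb x a y b) (br x z) (sb x a z c)
  + sb (br (br x z) x) (sb (br x z) (sb x a z c) x a) y b
  + sb (br y (br x z)) (sb y b (br x z) (sb x a z c)) x a
  = sb (jacobiator br x y z)
      (sb (br x y) (sb x a y b) z c + sb (br z x) (sb z c x a) y b + sb (br y z) (sb y b z c) x a) x a.
Proof.
move=> [Hbl Hbr] Abr [[[HVl HVr] AbV MV] [Hrl Hrr REP] M1 M2 M3] x y z a b c sb.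
pose ax (i : nat) := match i with 0 => x | 1 => y | _ => z end.
pose av (i : nat) := match i with 0 => a | 1 => b | _ => c end.
apply: (@chain_ok K A V ax av br rho brV lam two Hbl Hbr Abr HVl HVr AbV Hrl Hrr
  (LS (SAx 0) (SAx 1) (SAx 2) (SVa 0) (SVa 1) (SVa 2))
  (RS (SAx 0) (SAx 1) (SAx 2) (SVa 0) (SVa 1) (SVa 2)) HS _ check_core).
split; first exact: (MV a b c).
split; first exact: (M3 z a a b).
split; first exact: (M3 y a c a).
split; first exact: (M2 y z a a).
split; first exact: (esym (M3 x c a b)).
split; first exact: (esym (M3 x b c a)).
split; first exact: (esym (M3 x a c b)).
split; first exact: (esym (M3 x a b c)).
split; first exact: (M2 z x a b).
split; first exact: (M1 x z b a).
split; first exact: (M1 x y a c).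
split; first exact: (M2 x y c a).
split; first exact: (esym (REP y z x a)).
split; first exact: (esym (REP z x y a)).
split; first exact: (esym (REP x z y a)).
split; first exact: (esym (REP x y z a)).
split; first exact: (M2 x x b c).
split; first exact: (REP x z x b).
split; first exact: (REP x x y c).
done.
Qed.

Lemma two_nz (K : fieldType) (charK0 : [pchar K] =i pred0) : (2 : K) != 0.
Proof. apply/negP => H2; have := charK0 2%N; rewrite !inE /= H2. by []. Qed.

Unset Implicit Arguments.

Theorem corollary4p8 (K : fieldType) (charK0 : [pchar K] =i pred0)
  (A V : lmodType K) (br : A -> A -> A) (brV : V -> V -> V)
  (rho : A -> V -> V) (lam : K) (T : V -> A) :
  malcev br ->
  module_malcev br brV rho ->
  weighted_O_operator br brV rho lam T ->
  malcev (bracketT brV rho lam T) /\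
  malcev_hom (bracketT brV rho lam T) br T.
Proof.
move=> [Hbil Abr MA] HM [HT Hop].
have two := two_nz charK0.
have HM' := HM.
move: HM' => [[[HVl HVr] AbV MV] [Hrl Hrr REP] M1 M2 M3].
have TD : forall u v, T (u + v) = T u + T v by move=> u v; have := HT 1 u v; rewrite !scale1r.
have TB : forall u v, T (sbV brV rho lam (T u) u (T v) v) = br (T u) (T v).
  by move=> u v; rewrite /sbV -Hop.
split; last first.
  by split => // u v; rewrite /bracketT -Hop.
split.
- split.
  + move=> v k u u'; rewrite /bracketT HT (Hrl v) (Hrr (T v)) (HVl v).
    rewrite [lam *: _]scalerDr scalerA mulrC -scalerA.
    rewrite [in RHS]scalerDr [in RHS]scalerDr scalerN opprD.
    rewrite (addrACA (k *: _)).
    by rewrite (addrACA (k *: rho (T u) v - k *: rho (T v) u) (rho (T u') v - rho (T v) u')).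
  + move=> u k v v'; rewrite /bracketT HT (Hrl _) (Hrr (T u)) (HVr u).
    rewrite [lam *: _]scalerDr scalerA mulrC -scalerA.
    rewrite [in RHS]scalerDr [in RHS]scalerDr scalerN opprD.
    rewrite (addrACA (k *: _)).
    by rewrite (addrACA (k *: rho (T u) v - k *: rho (T v) u) (rho (T u) v' - rho (T v') u)).
- move=> u v; rewrite /bracketT (AbV v u) scalerN !opprD !opprK.
  by rewrite (addrC (- _)).
- move=> a b c.
  have bTE : forall u v, bracketT brV rho lam T u v = sbV brV rho lam (T u) u (T v) v by [].
  have TBb : forall u v, T (bracketT brV rho lam T u v) = br (T u) (T v).
    by move=> u v; rewrite /bracketT -Hop.
  have TJ : T (jacobiator (bracketT brV rho lam T) a b c) = jacobiator br (T a) (T b) (T c).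
    by rewrite /jacobiator TD TD !TBb.
  have H := @core K two A V br brV rho lam Hbil Abr HM (T a) (T b) (T c) a b c.
  move: H; rewrite /jacobiator -!TBb => H.
  rewrite [RHS]bTE TJ /jacobiator -!TBb.
  exact: H.
Qed.
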